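(* Let $h\in\mathbb N$ and $P\in\mathcal C(h)$ be such that every hole is an axis-aligned rectangle. Then for every $s\in P$ there is a path in $P$ from $s$ to a point of $\partial P_0$ of length at most ${\rm diam}_2(P)$.
   Context: $\mathcal C(h)$ is the family of polygonal domains $P=P_0\setminus\bigcup_{i=1}^h\operatorname{int}(P_i)$ with $P_0$ a convex polygon and $P_1,\dots,P_h$ pairwise disjoint convex polygons (holes) in the interior of $P_0$; ${\rm diam}_2(P)=\sup_{s,t\in P}|st|$. *)

(* Defs.v *)
From Stdlib Require Import Reals Lra List.
Open Scope R_scope.

Definition point := (R * R)%type.

Definition dist (p q : point) : R :=
  sqrt ((fst p - fst q)^2 + (snd p - snd q)^2).

Definition pinterior (A : point -> Prop) (p : point) : Prop :=
  exists eps, 0 < eps /\ forall q, dist p q < eps -> A q.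

Definition pclosure (A : point -> Prop) (p : point) : Prop :=
  forall eps, 0 < eps -> exists q, A q /\ dist p q < eps.

Definition pboundary (A : point -> Prop) (p : point) : Prop :=
  pclosure A p /\ ~ pinterior A p.

Fixpoint wsum (wl : list (R * point)) : point :=
  match wl with
  | nil => (0, 0)
  | (w, q) :: r => let s := wsum r in (w * fst q + fst s, w * snd q + snd s)
  end.

Fixpoint wtot (wl : list (R * point)) : R :=
  match wl with
  | nil => 0
  | (w, _) :: r => w + wtot r
  end.

Definition in_hull (l : list point) (p : point) : Prop :=
  exists wl : list (R * point),
    (forall w q, In (w, q) wl -> 0 <= w /\ In q l) /\
    wtot wl = 1 /\ p = wsum wl.

(* a convex polygon: convex hull of finitely many points, with nonempty
   pinterior (a genuine 2-dimensional polygon) *)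
Definition convex_polygon (A : point -> Prop) : Prop :=
  (exists l : list point, forall p, A p <-> in_hull l p) /\
  (exists p, pinterior A p).

Definition rect (r : R * R * R * R) (p : point) : Prop :=
  let '(a, b, c, d) := r in
  a <= fst p <= b /\ c <= snd p <= d.

Definition nondeg_rect (r : R * R * R * R) : Prop :=
  let '(a, b, c, d) := r in a < b /\ c < d.

Definition domain (P0 : point -> Prop) (h : nat) (H : nat -> R * R * R * R)
  (p : point) : Prop :=
  P0 p /\ forall i, (i < h)%nat -> ~ pinterior (rect (H i)) p.

Definition diam2 (A : point -> Prop) (d : R) : Prop :=
  is_lub (fun r => exists s t, A s /\ A t /\ r = dist s t) d.

Definition curve_continuous (g : R -> point) : Prop :=
  forall t, 0 <= t <= 1 -> forall eps, 0 < eps ->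
    exists delta, 0 < delta /\
      forall u, 0 <= u <= 1 -> Rabs (u - t) < delta -> dist (g u) (g t) < eps.

Fixpoint poly_len (g : R -> point) (t0 : R) (ts : list R) : R :=
  match ts with
  | nil => 0
  | t :: r => dist (g t0) (g t) + poly_len g t r
  end.

(* the length of g on [0,1] (the supremum over partitions) is at most L *)
Definition length_le (g : R -> point) (L : R) : Prop :=
  forall ts : list R,
    (forall t, In t ts -> 0 <= t <= 1) ->
    (forall (i : nat), (S i < length ts)%nat -> nth i ts 0 <= nth (S i) ts 0) ->
    poly_len g 0 ts <= L.

Definition path_in (A : point -> Prop) (g : R -> point) (s t : point) : Prop :=
  curve_continuous g /\ g 0 = s /\ g 1 = t /\
  forall u, 0 <= u <= 1 -> A (g u).

(* Main.v *)
From Stdlib Require Import Reals Lra List Classical Lia IndefiniteDescription.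
Require Import Defs.
Open Scope R_scope.

Lemma dist_ge0 p q : 0 <= dist p q.
Proof. unfold dist; apply sqrt_pos. Qed.

Lemma dist_sym p q : dist p q = dist q p.
Proof. unfold dist; f_equal; ring. Qed.

Lemma dist_refl p : dist p p = 0.
Proof. unfold dist. replace ((fst p - fst p) ^ 2 + (snd p - snd p) ^ 2) with 0 by ring. apply sqrt_0. Qed.

Lemma dist_le_abs p q : dist p q <= Rabs (fst p - fst q) + Rabs (snd p - snd q).
Proof.
  unfold dist. rewrite <- (sqrt_pow2 (Rabs (fst p - fst q) + Rabs (snd p - snd q))).
  2: generalize (Rabs_pos (fst p - fst q)) (Rabs_pos (snd p - snd q)); lra.
  apply sqrt_le_1_alt.
  rewrite <- (pow2_abs (fst p - fst q)), <- (pow2_abs (snd p - snd q)).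
  generalize (Rabs_pos (fst p - fst q)) (Rabs_pos (snd p - snd q)); intros; nra.
Qed.

Lemma absx_le_dist p q : Rabs (fst p - fst q) <= dist p q.
Proof.
  unfold dist. rewrite <- (sqrt_pow2 (Rabs (fst p - fst q))) by apply Rabs_pos.
  apply sqrt_le_1_alt. rewrite pow2_abs. generalize (pow2_ge_0 (snd p - snd q)); lra.
Qed.

Lemma absy_le_dist p q : Rabs (snd p - snd q) <= dist p q.
Proof.
  unfold dist. rewrite <- (sqrt_pow2 (Rabs (snd p - snd q))) by apply Rabs_pos.
  apply sqrt_le_1_alt. rewrite pow2_abs. generalize (pow2_ge_0 (fst p - fst q)); lra.
Qed.

Lemma dist_horiz x1 x2 y : dist (x1, y) (x2, y) = Rabs (x1 - x2).
Proof.
  unfold dist; cbn [fst snd]. replace ((x1 - x2) ^ 2 + (y - y) ^ 2) with (Rabs (x1 - x2) ^ 2)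
    by (rewrite pow2_abs; ring).
  apply sqrt_pow2, Rabs_pos.
Qed.

Lemma dist_vert x y1 y2 : dist (x, y1) (x, y2) = Rabs (y1 - y2).
Proof.
  unfold dist; cbn [fst snd]. replace ((x - x) ^ 2 + (y1 - y2) ^ 2) with (Rabs (y1 - y2) ^ 2)
    by (rewrite pow2_abs; ring).
  apply sqrt_pow2, Rabs_pos.
Qed.

Lemma dist_tri p q r : dist p r <= dist p q + dist q r.
Proof.
  unfold dist.
  set (a1 := fst p - fst q); set (a2 := snd p - snd q);
  set (b1 := fst q - fst r); set (b2 := snd q - snd r).
  replace (fst p - fst r) with (a1 + b1) by (unfold a1, b1; ring).
  replace (snd p - snd r) with (a2 + b2) by (unfold a2, b2; ring).
  assert (HA : 0 <= a1 ^ 2 + a2 ^ 2) by nra.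
  assert (HB : 0 <= b1 ^ 2 + b2 ^ 2) by nra.
  assert (Hs : a1 * b1 + a2 * b2 <= sqrt (a1 ^ 2 + a2 ^ 2) * sqrt (b1 ^ 2 + b2 ^ 2)).
  { rewrite <- sqrt_mult by auto.
    apply Rle_trans with (Rabs (a1 * b1 + a2 * b2)); [apply Rle_abs|].
    rewrite <- (sqrt_pow2 (Rabs (a1 * b1 + a2 * b2))) by apply Rabs_pos.
    apply sqrt_le_1_alt. rewrite pow2_abs.
    assert (0 <= (a1 * b2 - a2 * b1) ^ 2) by apply pow2_ge_0. nra. }
  rewrite <- (sqrt_pow2 (sqrt (a1 ^ 2 + a2 ^ 2) + sqrt (b1 ^ 2 + b2 ^ 2))).
  2: generalize (sqrt_pos (a1 ^ 2 + a2 ^ 2)) (sqrt_pos (b1 ^ 2 + b2 ^ 2)); lra.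
  apply sqrt_le_1_alt.
  assert (E1 : sqrt (a1 ^ 2 + a2 ^ 2) * sqrt (a1 ^ 2 + a2 ^ 2) = a1 ^ 2 + a2 ^ 2) by (apply sqrt_sqrt; auto).
  assert (E2 : sqrt (b1 ^ 2 + b2 ^ 2) * sqrt (b1 ^ 2 + b2 ^ 2) = b1 ^ 2 + b2 ^ 2) by (apply sqrt_sqrt; auto).
  nra.
Qed.

Definition scale (c : R) (wl : list (R * point)) : list (R * point) :=
  map (fun wq => (c * fst wq, snd wq)) wl.

Lemma wsum_app a b : wsum (a ++ b) = (fst (wsum a) + fst (wsum b), snd (wsum a) + snd (wsum b)).
Proof.
  induction a as [|[w q] r IH]; simpl.
  - destruct (wsum b); simpl; f_equal; ring.
  - rewrite IH; simpl; f_equal; ring.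
Qed.

Lemma wtot_app a b : wtot (a ++ b) = wtot a + wtot b.
Proof. induction a as [|[w q] r IH]; simpl; [ring| rewrite IH; ring]. Qed.

Lemma wsum_scale c a : wsum (scale c a) = (c * fst (wsum a), c * snd (wsum a)).
Proof.
  induction a as [|[w q] r IH]; simpl; [f_equal; ring|].
  rewrite IH; simpl; f_equal; ring.
Qed.

Lemma wtot_scale c a : wtot (scale c a) = c * wtot a.
Proof. induction a as [|[w q] r IH]; simpl; [ring| rewrite IH; ring]. Qed.

Lemma in_scale c a w q : In (w, q) (scale c a) -> exists w', w = c * w' /\ In (w', q) a.
Proof.
  unfold scale; intro Hin. apply in_map_iff in Hin as [[w' q'] [E Hi]]; simpl in E.
  inversion E; subst; eauto.
Qed.

Definition comb (a b : point) (l : R) : point :=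
  (fst a + l * (fst b - fst a), snd a + l * (snd b - snd a)).

Definition Conv (P : point -> Prop) := forall a b l, P a -> P b -> 0 <= l <= 1 -> P (comb a b l).
Definition Clos (P : point -> Prop) := forall p, pclosure P p -> P p.
Definition Bnd (P : point -> Prop) := exists B, forall p, P p -> Rabs (fst p) <= B /\ Rabs (snd p) <= B.

Lemma hull_conv l : Conv (in_hull l).
Proof.
  intros a b t [wa [Ha1 [Ha2 Ha3]]] [wb [Hb1 [Hb2 Hb3]]] Ht.
  exists (scale (1 - t) wa ++ scale t wb). split; [|split].
  - intros w q Hin. apply in_app_or in Hin as [Hin|Hin]; apply in_scale in Hin as [w' [-> Hi]].
    + destruct (Ha1 _ _ Hi); split; auto; nra.
    + destruct (Hb1 _ _ Hi); split; auto; nra.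
  - rewrite wtot_app, !wtot_scale, Ha2, Hb2; ring.
  - rewrite wsum_app, !wsum_scale; subst; unfold comb; simpl; f_equal; ring.
Qed.

Fixpoint lbnd (l : list point) : R :=
  match l with nil => 0 | q :: r => Rabs (fst q) + Rabs (snd q) + lbnd r end.

Lemma lbnd_ge0 l : 0 <= lbnd l.
Proof. induction l; simpl; [lra|]. generalize (Rabs_pos (fst a)) (Rabs_pos (snd a)); lra. Qed.

Lemma lbnd_in l q : In q l -> Rabs (fst q) <= lbnd l /\ Rabs (snd q) <= lbnd l.
Proof.
  induction l as [|a r IH]; simpl; [tauto|]. intros [->|Hi].
  - generalize (Rabs_pos (fst q)) (Rabs_pos (snd q)) (lbnd_ge0 r); lra.
  - destruct (IH Hi). generalize (Rabs_pos (fst a)) (Rabs_pos (snd a)); lra.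
Qed.

Lemma wsum_bnd wl B : (forall w q, In (w, q) wl -> 0 <= w /\ Rabs (fst q) <= B /\ Rabs (snd q) <= B) ->
  Rabs (fst (wsum wl)) <= wtot wl * B /\ Rabs (snd (wsum wl)) <= wtot wl * B.
Proof.
  induction wl as [|[w q] r IH]; simpl; intros Hw.
  - rewrite Rabs_R0; lra.
  - destruct (Hw w q (or_introl eq_refl)) as [H0 [H1 H2]].
    destruct IH as [I1 I2]; [intros; apply Hw; auto|].
    split; eapply Rle_trans; try apply Rabs_triang; rewrite Rabs_mult, (Rabs_right w) by lra; nra.
Qed.

Lemma hull_bnd l : Bnd (in_hull l).
Proof.
  exists (lbnd l). intros p [wl [H1 [H2 ->]]].
  assert (Hw : forall w q, In (w, q) wl -> 0 <= w /\ Rabs (fst q) <= lbnd l /\ Rabs (snd q) <= lbnd l).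
  { intros w q Hi. destruct (H1 w q Hi). split; auto. apply lbnd_in; auto. }
  destruct (wsum_bnd _ _ Hw). rewrite H2 in *. lra.
Qed.

Lemma wtot_ge0 wl : (forall w q, In (w, q) wl -> 0 <= w) -> 0 <= wtot wl.
Proof.
  induction wl as [|[w q] r IH]; simpl; intros Hw; [lra|].
  generalize (Hw w q (or_introl eq_refl)); intro. assert (0 <= wtot r) by (apply IH; eauto). lra.
Qed.

Lemma wsum_zero wl : (forall w q, In (w, q) wl -> 0 <= w) -> wtot wl = 0 -> wsum wl = (0, 0).
Proof.
  induction wl as [|[w q] r IH]; simpl; intros Hw Ht; [auto|].
  generalize (Hw w q (or_introl eq_refl)); intro.
  assert (0 <= wtot r) by (apply wtot_ge0; eauto).
  assert (w = 0) by lra. assert (wtot r = 0) by lra.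
  rewrite IH; eauto. subst; simpl; f_equal; ring.
Qed.

Lemma split_wl q l wl : (forall w p, In (w, p) wl -> 0 <= w /\ In p (q :: l)) ->
  exists a wl', 0 <= a /\ (forall w p, In (w, p) wl' -> 0 <= w /\ In p l) /\
    wtot wl = a + wtot wl' /\
    wsum wl = (a * fst q + fst (wsum wl'), a * snd q + snd (wsum wl')).
Proof.
  induction wl as [|[w p] r IH]; simpl; intros Hw.
  - exists 0, nil. simpl. split; [lra|split; [tauto|split; [ring|f_equal; ring]]].
  - destruct IH as [a [wl' [Ha [H1 [H2 H3]]]]]; [intros; apply Hw; auto|].
    destruct (Hw w p (or_introl eq_refl)) as [Hw0 [<-|Hin]].
    + exists (w + a), wl'. split; [lra|split; auto]. split; [rewrite H2; ring|].
      rewrite H3; simpl; f_equal; ring.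
    + exists a, ((w, p) :: wl'). split; auto. split.
      * simpl; intros w0 p0 [E|E]; [inversion E; subst; auto|auto].
      * simpl. split; [rewrite H2; ring|]. rewrite H3; simpl; f_equal; ring.
Qed.

Lemma hull_cons q l p : in_hull (q :: l) p <->
  p = q \/ exists t r, 0 < t <= 1 /\ in_hull l r /\ p = comb q r t.
Proof.
  split.
  - intros [wl [H1 [H2 H3]]].
    destruct (split_wl q l wl H1) as [a [wl' [Ha [G1 [G2 G3]]]]].
    assert (Hb : 0 <= wtot wl') by (apply wtot_ge0; intros; eapply G1; eauto).
    destruct (Req_dec (wtot wl') 0) as [E|E].
    + left. rewrite (wsum_zero wl') in G3; [|intros; eapply G1; eauto|auto].
      assert (a = 1) by lra. rewrite H3, G3. subst a. destruct q; simpl; f_equal; ring.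
    + right. set (b := wtot wl'). exists b, (/ b * fst (wsum wl'), / b * snd (wsum wl')).
      split; [unfold b; lra|split].
      * exists (scale (/ b) wl'). split; [|split].
        -- intros w0 p0 Hi. apply in_scale in Hi as [w' [-> Hi]]. destruct (G1 _ _ Hi).
           split; auto. apply Rmult_le_pos; auto. left; apply Rinv_0_lt_compat; unfold b; lra.
        -- rewrite wtot_scale. fold b. field. auto.
        -- rewrite wsum_scale; auto.
      * assert (Ea : a = 1 - b) by (unfold b; lra). rewrite H3, G3, Ea. unfold comb; simpl. f_equal; field; auto.
  - intros [->|[t [r [Ht [[wr [R1 [R2 R3]]] ->]]]]].
    + exists ((1, q) :: nil). split; [|split].
      * simpl; intros w p0 [E|[]]; inversion E; subst; split; [lra|left; auto].
      * simpl; ring.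
      * destruct q; simpl; f_equal; ring.
    + exists ((1 - t, q) :: scale t wr). split; [|split].
      * simpl; intros w p0 [E|Hi].
        -- inversion E; subst; split; [lra|left; auto].
        -- apply in_scale in Hi as [w' [-> Hi]]. destruct (R1 _ _ Hi); split; [nra|right; auto].
      * simpl; rewrite wtot_scale, R2; ring.
      * simpl; rewrite wsum_scale; subst; unfold comb; simpl; f_equal; ring.
Qed.
Lemma coord_est qa ra pa t L m e1 eta :
  0 < m -> m <= t -> m <= L ->
  Rabs (qa + t * (ra - qa) - pa) <= e1 -> Rabs (t - L) <= eta ->
  Rabs (ra - (qa + (pa - qa) / L)) <= e1 / m + Rabs (pa - qa) * eta / (m * m).
Proof.
  intros Hm Ht HL He Hn.
  assert (Ht0 : 0 < t) by lra. assert (HL0 : 0 < L) by lra.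
  assert (E : ra - (qa + (pa - qa) / L) = (L * (qa + t * (ra - qa) - pa) + (L - t) * (pa - qa)) / (t * L))
    by (field; lra).
  rewrite E. unfold Rdiv. rewrite Rabs_mult, Rabs_inv, (Rabs_right (t * L)) by nra.
  assert (B : Rabs (L * (qa + t * (ra - qa) - pa) + (L - t) * (pa - qa)) <= L * e1 + eta * Rabs (pa - qa)).
  { eapply Rle_trans; [apply Rabs_triang|]. rewrite !Rabs_mult, (Rabs_right L) by lra.
    rewrite Rabs_minus_sym in Hn. generalize (Rabs_pos (pa - qa)) (Rabs_pos (L - t)); nra. }
  generalize (Rabs_pos (pa - qa)). intro.
  assert (e1 >= 0 \/ e1 < 0) by lra.
  apply Rle_trans with ((L * e1 + eta * Rabs (pa - qa)) * / (t * L)).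
  - apply Rmult_le_compat_r; [left; apply Rinv_0_lt_compat; nra| auto].
  - assert (0 <= e1) by (generalize (Rabs_pos (qa + t * (ra - qa) - pa)); lra).
    assert (0 <= eta) by (generalize (Rabs_pos (t - L)); lra).
    apply Rle_trans with (e1 / t + eta * Rabs (pa - qa) / (t * L)).
    + right; field; lra.
    + apply Rplus_le_compat.
      * unfold Rdiv; apply Rmult_le_compat_l; auto. apply Rinv_le_contravar; lra.
      * unfold Rdiv. rewrite (Rmult_comm (Rabs _) eta). apply Rmult_le_compat_l; [nra|].
        apply Rinv_le_contravar; nra.
Qed.

Lemma dist_eq0 p q : dist p q = 0 -> p = q.
Proof.
  unfold dist; intro E. apply sqrt_eq_0 in E; [|generalize (pow2_ge_0 (fst p - fst q)) (pow2_ge_0 (snd p - snd q)); lra].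
  destruct p, q; cbn [fst snd] in *. generalize (pow2_ge_0 (r - r1)) (pow2_ge_0 (r0 - r2)); intros.
  assert (H1 : (r - r1) ^ 2 = 0) by lra. assert (H2 : (r0 - r2) ^ 2 = 0) by lra.
  assert (r - r1 = 0) by nra. assert (r0 - r2 = 0) by nra. f_equal; lra.
Qed.

Lemma seq_choice (A : Type) (P : nat -> A -> Prop) : (forall n, exists x, P n x) -> exists f, forall n, P n (f n).
Proof.
  intro H. exists (fun n => proj1_sig (constructive_indefinite_description _ (H n))).
  intro n. apply proj2_sig.
Qed.

Lemma hull_nil p : ~ in_hull nil p.
Proof.
  intros [wl [H1 [H2 _]]]. destruct wl as [|[w q] r].
  - simpl in H2; lra.
  - destruct (H1 w q (or_introl eq_refl)) as [_ []].
Qed.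

Lemma hull_clos l : Clos (in_hull l).
Proof.
  induction l as [|q l IH]; intros p Hp.
  - destruct (Hp 1) as [q [Hq _]]; [lra|]. destruct (hull_nil _ Hq).
  - apply hull_cons. destruct (classic (p = q)) as [E|Hne]; [left; auto|right].
    set (d := dist p q).
    assert (Hd : 0 < d).
    { destruct (dist_ge0 p q) as [?|E]; auto. exfalso; apply Hne, dist_eq0; auto. }
    destruct (hull_bnd l) as [B HB].
    set (M := 2 * B + Rabs (fst q) + Rabs (snd q) + 1).
    assert (Hseq : forall n : nat, exists tr : R * point,
      0 < fst tr <= 1 /\ in_hull l (snd tr) /\ dist p (comb q (snd tr) (fst tr)) < d / (INR n + 2)).
    { intro n. assert (Hn : 0 < d / (INR n + 2)) by (apply Rdiv_lt_0_compat; auto; generalize (pos_INR n); lra).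
      destruct (Hp _ Hn) as [p' [Hp' Hdp]].
      apply hull_cons in Hp' as [->|[t [r [Ht [Hr ->]]]]].
      - exfalso. assert (d / (INR n + 2) <= d / 2).
        { apply Rmult_le_compat_l; [lra|]. apply Rinv_le_contravar; [lra|]. generalize (pos_INR n); lra. }
        fold d in Hdp. lra.
      - exists (t, r); simpl; auto. }
    apply seq_choice in Hseq as [f Hf].
    assert (HB0 : 0 <= B).
    { destruct (Hf O) as [_ [Hr _]]. destruct (HB _ Hr). generalize (Rabs_pos (fst (snd (f O)))); lra. }
    assert (HM : 0 < M) by (unfold M; generalize (Rabs_pos (fst q)) (Rabs_pos (snd q)); lra).
    set (m := d / (2 * M)).
    assert (Hm : 0 < m) by (unfold m; apply Rdiv_lt_0_compat; lra).
    assert (Hlow : forall n, m <= fst (f n) <= 1).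
    { intro n. destruct (Hf n) as [Ht [Hr Hdn]]. split; [|lra].
      set (t := fst (f n)) in *. set (r := snd (f n)) in *.
      assert (d / (INR n + 2) <= d / 2).
      { apply Rmult_le_compat_l; [lra|]. apply Rinv_le_contravar; [lra|]. generalize (pos_INR n); lra. }
      assert (Hc : dist (comb q r t) q <= t * M).
      { eapply Rle_trans; [apply dist_le_abs|]. unfold comb; simpl.
        replace (fst q + t * (fst r - fst q) - fst q) with (t * (fst r - fst q)) by ring.
        replace (snd q + t * (snd r - snd q) - snd q) with (t * (snd r - snd q)) by ring.
        rewrite !Rabs_mult, (Rabs_right t) by lra.
        destruct (HB r Hr).
        generalize (Rabs_triang (fst r) (- fst q)) (Rabs_triang (snd r) (- snd q)).
        rewrite !Rabs_Ropp. unfold Rminus. unfold M. nra. }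
      generalize (dist_tri p (comb q r t) q). fold d. intro.
      unfold m. apply Rmult_le_reg_r with (2 * M); [lra|].
      unfold Rdiv; rewrite Rmult_assoc, Rinv_l, Rmult_1_r by lra. lra. }
    destruct (Bolzano_Weierstrass (fun n => fst (f n)) (fun c => m <= c <= 1) (compact_P3 m 1) Hlow) as [L HL].
    assert (HLr : m <= L <= 1).
    { split; apply Rnot_lt_le; intro C.
      - assert (Hp0 : 0 < m - L) by lra.
        destruct (HL (disc L (mkposreal _ Hp0)) O) as [n [_ Hn]].
        + exists (mkposreal _ Hp0); intros x Hx; auto.
        + unfold disc in Hn; simpl in Hn. generalize (Hlow n) (Rle_abs (fst (f n) - L)) (Rabs_minus_sym (fst (f n)) L) (Rle_abs (L - fst (f n))); lra.
      - assert (Hp0 : 0 < L - 1) by lra.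
        destruct (HL (disc L (mkposreal _ Hp0)) O) as [n [_ Hn]].
        + exists (mkposreal _ Hp0); intros x Hx; auto.
        + unfold disc in Hn; simpl in Hn. generalize (Hlow n) (Rabs_minus_sym (fst (f n)) L) (Rle_abs (L - fst (f n))); lra. }
    set (rs := (fst q + (fst p - fst q) / L, snd q + (snd p - snd q) / L)).
    exists L, rs. split; [lra|split].
    + apply IH. intros eps Heps.
      set (K := Rabs (fst p - fst q) + Rabs (snd p - snd q) + 1).
      assert (HK : 0 < K) by (unfold K; generalize (Rabs_pos (fst p - fst q)) (Rabs_pos (snd p - snd q)); lra).
      set (eta := eps * (m * m) / (4 * K)).
      assert (Heta : 0 < eta) by (unfold eta; apply Rdiv_lt_0_compat; [apply Rmult_lt_0_compat; [lra|nra]|lra]).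
      destruct (INR_archimed (eps * m / 4) d) as [N HN]; [nra|].
      destruct (HL (disc L (mkposreal _ Heta)) N) as [n [HnN Hn]].
      { exists (mkposreal _ Heta); intros x Hx; auto. }
      unfold disc in Hn; simpl in Hn.
      destruct (Hf n) as [Ht [Hr Hdn]].
      exists (snd (f n)). split; auto.
      set (t := fst (f n)) in *. set (r := snd (f n)) in *.
      assert (Hen : d / (INR n + 2) < eps * m / 4).
      { apply le_INR in HnN. apply Rmult_lt_reg_r with (INR n + 2); [generalize (pos_INR n); lra|].
        unfold Rdiv at 1. rewrite Rmult_assoc, Rinv_l, Rmult_1_r by (generalize (pos_INR n); lra). assert (0 < eps * m / 4) by nra. generalize (pos_INR n); intro. nra. }
      assert (Hx := absx_le_dist p (comb q r t)). assert (Hy := absy_le_dist p (comb q r t)).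
      rewrite Rabs_minus_sym in Hx, Hy. unfold comb in Hx, Hy, Hdn; simpl in Hx, Hy.
      assert (Htm : m <= t) by (apply Hlow).
      assert (Hn' : Rabs (t - L) <= eta) by lra.
      assert (C1 := coord_est (fst q) (fst r) (fst p) t L m _ _ ltac:(lra) Htm ltac:(lra) ltac:(apply Rle_refl) Hn').
      assert (C2 := coord_est (snd q) (snd r) (snd p) t L m _ _ ltac:(lra) Htm ltac:(lra) ltac:(apply Rle_refl) Hn').
      rewrite dist_sym. eapply Rle_lt_trans; [apply dist_le_abs|]. unfold rs; simpl.
      assert (Z1 : Rabs (fst q + t * (fst r - fst q) - fst p) / m < eps / 4).
      { apply Rmult_lt_reg_r with m; auto. unfold Rdiv; rewrite Rmult_assoc, Rinv_l, Rmult_1_r by lra. nra. }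
      assert (Z2 : Rabs (snd q + t * (snd r - snd q) - snd p) / m < eps / 4).
      { apply Rmult_lt_reg_r with m; auto. unfold Rdiv; rewrite Rmult_assoc, Rinv_l, Rmult_1_r by lra. nra. }
      assert (Z3 : Rabs (fst p - fst q) * eta / (m * m) + Rabs (snd p - snd q) * eta / (m * m) <= eps / 4).
      { replace (Rabs (fst p - fst q) * eta / (m * m) + Rabs (snd p - snd q) * eta / (m * m))
          with ((Rabs (fst p - fst q) + Rabs (snd p - snd q)) * eps / (4 * K)) by (unfold eta; field; repeat split; lra).
        apply Rmult_le_reg_r with (4 * K); [lra|].
        unfold Rdiv; rewrite Rmult_assoc, Rinv_l, Rmult_1_r by lra. unfold K. nra. }
      lra.
    + unfold comb, rs; simpl. destruct p as [px py]; simpl. f_equal; field; lra.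
Qed.

Definition lip (g : R -> point) K := forall u v, 0 <= u <= 1 -> 0 <= v <= 1 -> dist (g u) (g v) <= K * Rabs (u - v).
Definition mono (g : R -> point) := forall u v, 0 <= u -> u <= v -> v <= 1 -> fst (g u) <= fst (g v) /\ snd (g u) <= snd (g v).
Definition gp (A : point -> Prop) a c := exists g K, 0 <= K /\ lip g K /\ mono g /\ g 0 = a /\ g 1 = c /\
  forall u, 0 <= u <= 1 -> A (g u).

Lemma dist_comb a c u v : dist (comb a c u) (comb a c v) = Rabs (u - v) * dist a c.
Proof.
  unfold dist, comb; cbn [fst snd].
  replace ((fst a + u * (fst c - fst a) - (fst a + v * (fst c - fst a))) ^ 2 +
     (snd a + u * (snd c - snd a) - (snd a + v * (snd c - snd a))) ^ 2)
   with (Rabs (u - v) ^ 2 * ((fst a - fst c) ^ 2 + (snd a - snd c) ^ 2)) by (rewrite pow2_abs; ring).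
  rewrite sqrt_mult_alt by apply pow2_ge_0. rewrite sqrt_pow2 by apply Rabs_pos. auto.
Qed.

Lemma comb0 a c : comb a c 0 = a.
Proof. destruct a; unfold comb; simpl; f_equal; ring. Qed.
Lemma comb1 a c : comb a c 1 = c.
Proof. destruct a, c; unfold comb; simpl; f_equal; ring. Qed.

Lemma gp_seg (A : point -> Prop) a c : fst a <= fst c -> snd a <= snd c ->
  (forall l, 0 <= l <= 1 -> A (comb a c l)) -> gp A a c.
Proof.
  intros Hx Hy HA. exists (comb a c), (dist a c). split; [apply dist_ge0|]. split; [|split; [|split; [|split]]].
  - intros u v _ _. rewrite dist_comb. rewrite Rmult_comm; lra.
  - intros u v Hu Huv Hv. unfold comb; simpl. split; nra.
  - apply comb0.
  - apply comb1.
  - auto.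
Qed.

Definition cat (g1 g2 : R -> point) (u : R) : point :=
  if Rle_dec u (1/2) then g1 (2 * u) else g2 (2 * u - 1).

Lemma gp_trans A a b c : gp A a b -> gp A b c -> gp A a c.
Proof.
  intros [g1 [K1 [HK1 [L1 [M1 [A1 [B1 I1]]]]]]] [g2 [K2 [HK2 [L2 [M2 [A2 [B2 I2]]]]]]].
  exists (cat g1 g2), (2 * (K1 + K2)).
  assert (Mixed : forall u v, 0 <= u <= 1/2 -> 1/2 < v <= 1 -> dist (g1 (2 * u)) (g2 (2 * v - 1)) <= 2 * (K1 + K2) * Rabs (u - v)).
  { intros u v Hu Hv. eapply Rle_trans; [apply (dist_tri _ (g1 1))|].
    assert (E1 := L1 (2 * u) 1 ltac:(lra) ltac:(lra)). assert (E2 := L2 0 (2 * v - 1) ltac:(lra) ltac:(lra)).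
    rewrite B1, <- A2 in E1 |- *. rewrite Rabs_left1 in E1 by lra. rewrite Rabs_left1 in E2 by lra.
    rewrite Rabs_left1 by lra. nra. }
  split; [lra|split; [|split; [|split; [|split]]]].
  - intros u v Hu Hv. unfold cat.
    destruct (Rle_dec u (1/2)), (Rle_dec v (1/2)).
    + eapply Rle_trans; [apply L1; lra|].
      replace (2 * u - 2 * v) with (2 * (u - v)) by ring. rewrite Rabs_mult, Rabs_right by lra.
      generalize (Rabs_pos (u - v)); nra.
    + apply Mixed; lra.
    + rewrite dist_sym, Rabs_minus_sym. apply Mixed; lra.
    + eapply Rle_trans; [apply L2; lra|].
      replace (2 * u - 1 - (2 * v - 1)) with (2 * (u - v)) by ring. rewrite Rabs_mult, Rabs_right by lra.
      generalize (Rabs_pos (u - v)); nra.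
  - intros u v Hu Huv Hv. unfold cat.
    destruct (Rle_dec u (1/2)), (Rle_dec v (1/2)).
    + apply M1; lra.
    + destruct (M1 (2 * u) 1) as [X1 Y1]; try lra. destruct (M2 0 (2 * v - 1)) as [X2 Y2]; try lra.
      rewrite B1, <- A2 in *. split; lra.
    + lra.
    + apply M2; lra.
  - unfold cat. destruct (Rle_dec 0 (1/2)); [|lra]. replace (2 * 0) with 0 by ring; auto.
  - unfold cat. destruct (Rle_dec 1 (1/2)); [lra|]. replace (2 * 1 - 1) with 1 by ring; auto.
  - intros u Hu. unfold cat. destruct (Rle_dec u (1/2)); [apply I1; lra|apply I2; lra].
Qed.

Fixpoint srt (a : R) (ts : list R) : Prop :=
  match ts with nil => True | t :: r => a <= t /\ srt t r end.

Lemma nth_srt ts : forall a, (forall i, (S i < length ts)%nat -> nth i ts 0 <= nth (S i) ts 0) ->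
  (match ts with nil => True | t :: _ => a <= t end) -> srt a ts.
Proof.
  induction ts as [|t r IH]; simpl; intros a Hn Ha; auto. split; auto.
  apply IH.
  - intros i Hi. apply (Hn (S i)). simpl. lia.
  - destruct r as [|t' r']; auto. apply (Hn O). simpl; lia.
Qed.

Lemma poly_mono g : mono g -> forall ts t0, 0 <= t0 <= 1 -> (forall t, In t ts -> 0 <= t <= 1) -> srt t0 ts ->
  poly_len g t0 ts <= (fst (g 1) - fst (g t0)) + (snd (g 1) - snd (g t0)).
Proof.
  intros Hm. induction ts as [|t r IH]; simpl; intros t0 Ht0 Hin Hs.
  - destruct (Hm t0 1) as [X Y]; lra.
  - destruct Hs as [Hle Hs]. assert (Ht : 0 <= t <= 1) by auto.
    assert (IH' := IH t Ht (fun x Hx => Hin x (or_intror Hx)) Hs).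
    destruct (Hm t0 t) as [X Y]; try lra.
    assert (Hd := dist_le_abs (g t0) (g t)).
    rewrite (Rabs_minus_sym (fst (g t0))), (Rabs_minus_sym (snd (g t0))), !Rabs_right in Hd by lra.
    lra.
Qed.

Lemma gp_path A s t : gp A s t -> exists g, path_in A g s t /\
  forall ts, (forall x, In x ts -> 0 <= x <= 1) ->
    (forall (i : nat), (S i < length ts)%nat -> nth i ts 0 <= nth (S i) ts 0) ->
    poly_len g 0 ts <= (fst t - fst s) + (snd t - snd s).
Proof.
  intros [g [K [HK [L [M [G0 [G1 I]]]]]]]. exists g. split; [split; [|split; [|split]]|]; auto.
  - intros x Hx eps Heps. exists (eps / (K + 1)). split; [apply Rdiv_lt_0_compat; lra|].
    intros u Hu Hux. eapply Rle_lt_trans; [apply L; auto|].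
    apply Rle_lt_trans with (K * (eps / (K + 1))).
    + apply Rmult_le_compat_l; lra.
    + apply Rmult_lt_reg_r with (K + 1); [lra|]. unfold Rdiv.
      rewrite Rmult_assoc, (Rmult_assoc eps), Rinv_l, Rmult_1_r by lra. nra.
  - intros ts Hin Hn. rewrite <- G0, <- G1. apply poly_mono; auto; [lra|].
    apply nth_srt; auto. destruct ts; auto. apply (Hin r (or_introl eq_refl)).
Qed.

Definition ra (r : R * R * R * R) := let '(a, _, _, _) := r in a.
Definition rb (r : R * R * R * R) := let '(_, b, _, _) := r in b.
Definition rc (r : R * R * R * R) := let '(_, _, c, _) := r in c.
Definition rd (r : R * R * R * R) := let '(_, _, _, d) := r in d.

Lemma rect_iff r p : rect r p <-> (ra r <= fst p <= rb r /\ rc r <= snd p <= rd r).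
Proof. destruct r as [[[a b] c] d]; simpl; tauto. Qed.

Lemma pint_sub A p : pinterior A p -> A p.
Proof. intros [e [He Hq]]. apply Hq. rewrite dist_refl; auto. Qed.

Lemma pint_rect r p : pinterior (rect r) p <-> (ra r < fst p < rb r /\ rc r < snd p < rd r).
Proof.
  destruct p as [x y]; simpl. split.
  - intros [e [He Hq]].
    assert (H1 := Hq (x - e / 2, y)). assert (H2 := Hq (x + e / 2, y)).
    assert (H3 := Hq (x, y - e / 2)). assert (H4 := Hq (x, y + e / 2)).
    rewrite dist_horiz in H1, H2. rewrite dist_vert in H3, H4.
    rewrite Rabs_right in H1, H3 by lra. rewrite Rabs_left in H2, H4 by lra.
    rewrite rect_iff in H1, H2, H3, H4; simpl in *.
    destruct (H1 ltac:(lra)), (H2 ltac:(lra)), (H3 ltac:(lra)), (H4 ltac:(lra)). lra.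
  - intros Hr. exists (Rmin (Rmin (x - ra r) (rb r - x)) (Rmin (y - rc r) (rd r - y))).
    split.
    + repeat apply Rmin_glb_lt; lra.
    + intros q Hq. rewrite rect_iff.
      assert (Hx := absx_le_dist (x, y) q). assert (Hy := absy_le_dist (x, y) q). simpl in Hx, Hy.
      generalize (Rmin_l (Rmin (x - ra r) (rb r - x)) (Rmin (y - rc r) (rd r - y)))
        (Rmin_r (Rmin (x - ra r) (rb r - x)) (Rmin (y - rc r) (rd r - y)))
        (Rmin_l (x - ra r) (rb r - x)) (Rmin_r (x - ra r) (rb r - x))
        (Rmin_l (y - rc r) (rd r - y)) (Rmin_r (y - rc r) (rd r - y)).
      generalize (Rle_abs (x - fst q)) (Rle_abs (y - snd q)) (Rabs_minus_sym x (fst q)) (Rabs_minus_sym y (snd q))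
        (Rle_abs (fst q - x)) (Rle_abs (snd q - y)).
      intros. lra.
Qed.

Lemma hseg (A : point -> Prop) x0 x1 y : x0 <= x1 -> (forall x, x0 <= x <= x1 -> A (x, y)) -> gp A (x0, y) (x1, y).
Proof.
  intros Hle HA. apply gp_seg; simpl; try lra. intros l Hl. unfold comb; simpl.
  replace (y + l * (y - y)) with y by ring. apply HA; nra.
Qed.

Lemma vseg (A : point -> Prop) x y0 y1 : y0 <= y1 -> (forall y, y0 <= y <= y1 -> A (x, y)) -> gp A (x, y0) (x, y1).
Proof.
  intros Hle HA. apply gp_seg; simpl; try lra. intros l Hl. unfold comb; simpl.
  replace (x + l * (x - x)) with x by ring. apply HA; nra.
Qed.

Lemma exit (P0 : point -> Prop) x0 y0 : Conv P0 -> Clos P0 -> Bnd P0 -> P0 (x0, y0) ->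
  exists X0, x0 <= X0 /\ pboundary P0 (X0, y0) /\ P0 (X0, y0) /\ forall x, x0 <= x <= X0 -> P0 (x, y0).
Proof.
  intros Hc Hcl [B HB] H0.
  set (S := fun x => x0 <= x /\ P0 (x, y0)).
  destruct (completeness S) as [X0 [Hub Hl]].
  - exists B. intros x [_ Hx]. destruct (HB _ Hx) as [Hb _]. simpl in Hb. generalize (Rle_abs x); lra.
  - exists x0; split; [lra|auto].
  - assert (Hx0 : x0 <= X0) by (apply Hub; split; [lra|auto]).
    assert (HP : P0 (X0, y0)).
    { apply Hcl. intros eps Heps.
      destruct (classic (exists x, S x /\ X0 - eps < x)) as [[x [Sx Hx]]|Hn].
      - exists (x, y0). split; [apply Sx|]. rewrite dist_horiz. assert (x <= X0) by (apply Hub; auto).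
        rewrite Rabs_right by lra. lra.
      - exfalso. assert (X0 <= X0 - eps); [|lra]. apply Hl. intros x Sx. apply Rnot_lt_le. intro C. apply Hn; eauto. }
    exists X0. split; [auto|split; [split|split; [auto|]]].
    + intros eps Heps. exists (X0, y0); split; auto. rewrite dist_refl; auto.
    + intros [e [He Hq]]. assert (S (X0 + e / 2)).
      { split; [lra|]. apply Hq. rewrite dist_horiz, Rabs_left by lra. lra. }
      assert (X0 + e / 2 <= X0) by (apply Hub; auto). lra.
    + intros x Hx. destruct (Req_dec X0 x0) as [E|E].
      * replace x with x0 by lra. auto.
      * replace (x, y0) with (comb (x0, y0) (X0, y0) ((x - x0) / (X0 - x0))).
        -- apply Hc; auto. split; [apply Rmult_le_pos; [lra|left; apply Rinv_0_lt_compat; lra]|].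
           apply Rmult_le_reg_r with (X0 - x0); [lra|]. unfold Rdiv; rewrite Rmult_assoc, Rinv_l, Rmult_1_r by lra. lra.
        -- unfold comb; simpl; f_equal; [field; lra|ring].
Qed.

Fixpoint cnt (H : nat -> R * R * R * R) (k : nat) (x : R) : nat :=
  match k with
  | O => O
  | S k => (cnt H k x + if Rlt_dec x (rb (H k)) then 1 else 0)%nat
  end.

Lemma cnt_mono H k x x' : x <= x' -> (cnt H k x' <= cnt H k x)%nat.
Proof.
  intro Hx. induction k; simpl; [lia|].
  destruct (Rlt_dec x' (rb (H k))), (Rlt_dec x (rb (H k))); try lia. exfalso; lra.
Qed.

Lemma cnt_dec H k x x' i : (i < k)%nat -> x < rb (H i) <= x' -> (cnt H k x' < cnt H k x)%nat.
Proof.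
  intros Hi Hx. induction k; [lia|]. simpl.
  assert (Hm := cnt_mono H k x x' ltac:(lra)).
  destruct (Nat.eq_dec i k) as [->|Hne].
  - destruct (Rlt_dec x' (rb (H k))), (Rlt_dec x (rb (H k))); try lra. lia.
  - assert (IH : (cnt H k x' < cnt H k x)%nat) by (apply IHk; lia).
    destruct (Rlt_dec x' (rb (H k))), (Rlt_dec x (rb (H k))); try lia. exfalso; lra.
Qed.

Lemma min_ex (P : nat -> Prop) (f : nat -> R) k : (exists i, (i < k)%nat /\ P i) ->
  exists i, (i < k)%nat /\ P i /\ forall j, (j < k)%nat -> P j -> f i <= f j.
Proof.
  induction k as [|k IH]; intros [i [Hi Pi]]; [lia|].
  destruct (classic (exists i, (i < k)%nat /\ P i)) as [Ex|NEx].
  - destruct (IH Ex) as [i0 [Hi0 [Pi0 Hmin]]].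
    destruct (classic (P k /\ f k < f i0)) as [[Pk Hlt]|Hn].
    + exists k. split; [lia|split; auto]. intros j Hj Pj.
      destruct (Nat.eq_dec j k) as [->|]; [lra|]. assert (f i0 <= f j) by (apply Hmin; auto; lia). lra.
    + exists i0. split; [lia|split; auto]. intros j Hj Pj.
      destruct (Nat.eq_dec j k) as [->|]; [|apply Hmin; auto; lia].
      apply Rnot_lt_le. intro C; apply Hn; auto.
  - assert (i = k). { destruct (Nat.eq_dec i k); auto. exfalso; apply NEx; exists i; split; auto; lia. }
    subst. exists k. split; [lia|split; auto]. intros j Hj Pj.
    destruct (Nat.eq_dec j k) as [->|]; [lra|]. exfalso; apply NEx; exists j; split; auto; lia.
Qed.


Lemma edge_dom P0 h H i p : (forall i, (i < h)%nat -> forall p, rect (H i) p -> P0 p) ->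
  (forall i j, (i < h)%nat -> (j < h)%nat -> i <> j -> forall p, ~ (rect (H i) p /\ rect (H j) p)) ->
  (i < h)%nat -> rect (H i) p -> (fst p = ra (H i) \/ snd p = rd (H i)) -> domain P0 h H p.
Proof.
  intros Hin Hdis Hi Hr He. split; [eapply Hin; eauto|]. intros j Hj Hint.
  destruct (Nat.eq_dec i j) as [<-|Hne].
  - apply pint_rect in Hint. lra.
  - apply (Hdis i j Hi Hj Hne p). split; auto. apply pint_sub; auto.
Qed.

Lemma step P0 h H : Conv P0 -> Clos P0 -> Bnd P0 ->
  (forall i, (i < h)%nat -> forall p, rect (H i) p -> P0 p) ->
  (forall i j, (i < h)%nat -> (j < h)%nat -> i <> j -> forall p, ~ (rect (H i) p /\ rect (H j) p)) ->
  forall q, domain P0 h H q ->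
  (exists t, pboundary P0 t /\ domain P0 h H t /\ gp (domain P0 h H) q t) \/
  (exists q', domain P0 h H q' /\ gp (domain P0 h H) q q' /\ (cnt H h (fst q') < cnt H h (fst q))%nat).
Proof.
  intros Hc Hcl Hb Hin Hdis [x0 y0] [HP Hni].
  destruct (exit P0 x0 y0 Hc Hcl Hb HP) as [X0 [HX0 [Hbd [HPX Hseg]]]].
  set (Bs := fun i => rc (H i) < y0 < rd (H i) /\ x0 < rb (H i) /\ ra (H i) < rb (H i)).
  assert (Fa : forall i, (i < h)%nat -> Bs i -> x0 <= ra (H i)).
  { intros i Hi [H1 [H2 H3]]. apply Rnot_lt_le; intro C. apply (Hni i Hi). apply pint_rect; simpl; lra. }
  assert (IntB : forall j x, (j < h)%nat -> x0 <= x -> pinterior (rect (H j)) (x, y0) -> Bs j /\ ra (H j) < x).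
  { intros j x Hj Hx Hint. apply pint_rect in Hint; simpl in Hint. unfold Bs; repeat split; lra. }
  destruct (classic (exists i, (i < h)%nat /\ (Bs i /\ ra (H i) < X0))) as [Ex|NEx].
  - right.
    assert (Ex' : exists i, (i < h)%nat /\ Bs i) by (destruct Ex as [i [Hi [Bi _]]]; eauto).
    destruct (min_ex Bs (fun i => ra (H i)) h Ex') as [i [Hi [Bi Hmin]]].
    assert (HaX : ra (H i) < X0).
    { destruct Ex as [j [Hj [Bj Hjx]]]. assert (ra (H i) <= ra (H j)) by (apply Hmin; auto). lra. }
    assert (Hxa := Fa i Hi Bi). destruct Bi as [[Hc1 Hc2] [Hb1 Hab]].
    exists (rb (H i), rd (H i)). split; [|split].
    + apply (edge_dom P0 h H i); auto; try (apply rect_iff; simpl; lra); simpl; auto.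
    + apply gp_trans with (ra (H i), y0); [|apply gp_trans with (ra (H i), rd (H i))].
      * apply hseg; auto. intros x Hx. split; [apply Hseg; lra|].
        intros j Hj Hint. destruct (IntB j x Hj ltac:(lra) Hint) as [Bj Hjx].
        assert (ra (H i) <= ra (H j)) by (apply Hmin; auto). lra.
      * apply vseg; [lra|]. intros y Hy. apply (edge_dom P0 h H i); auto; try (apply rect_iff; simpl; lra); simpl; auto.
      * apply hseg; [lra|]. intros x Hx. apply (edge_dom P0 h H i); auto; try (apply rect_iff; simpl; lra); simpl; auto.
    + simpl. apply (cnt_dec H h x0 (rb (H i)) i); auto; lra.
  - left. exists (X0, y0).
    assert (HD : forall x, x0 <= x <= X0 -> domain P0 h H (x, y0)).
    { intros x Hx. split; [apply Hseg; auto|]. intros j Hj Hint.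
      destruct (IntB j x Hj ltac:(lra) Hint) as [Bj Hjx]. apply NEx. exists j. split; auto. split; auto. lra. }
    split; [auto|split; [apply HD; lra|]]. apply hseg; auto.
Qed.

Lemma core P0 h H : Conv P0 -> Clos P0 -> Bnd P0 ->
  (forall i, (i < h)%nat -> forall p, rect (H i) p -> P0 p) ->
  (forall i j, (i < h)%nat -> (j < h)%nat -> i <> j -> forall p, ~ (rect (H i) p /\ rect (H j) p)) ->
  forall q, domain P0 h H q -> exists t, pboundary P0 t /\ domain P0 h H t /\ gp (domain P0 h H) q t.
Proof.
  intros Hc Hcl Hb Hin Hdis.
  assert (forall n q, (cnt H h (fst q) <= n)%nat -> domain P0 h H q ->
    exists t, pboundary P0 t /\ domain P0 h H t /\ gp (domain P0 h H) q t).
  { induction n as [|n IH]; intros q Hn Hq.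
    - destruct (step P0 h H Hc Hcl Hb Hin Hdis q Hq) as [R|[q' [_ [_ Hlt]]]]; auto. lia.
    - destruct (step P0 h H Hc Hcl Hb Hin Hdis q Hq) as [R|[q' [Hq' [Hg Hlt]]]]; auto.
      destruct (IH q' ltac:(lia) Hq') as [t [Ht1 [Ht2 Ht3]]]. exists t. split; auto. split; auto.
      eapply gp_trans; eauto. }
  intros q Hq. eapply H0; eauto.
Qed.

Definition neg (p : point) : point := (- fst p, - snd p).
Definition negr (r : R * R * R * R) : R * R * R * R := let '(a, b, c, d) := r in (-b, -a, -d, -c).

Lemma neg_neg p : neg (neg p) = p.
Proof. destruct p; unfold neg; simpl; f_equal; ring. Qed.

Lemma dist_neg p q : dist (neg p) (neg q) = dist p q.
Proof. unfold dist, neg; cbn [fst snd]; f_equal; ring. Qed.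

Lemma pint_ext (A B : point -> Prop) p : (forall x, A x <-> B x) -> pinterior A p -> pinterior B p.
Proof. intros E [e [He Hq]]. exists e; split; auto. intros; apply E; auto. Qed.

Lemma pint_neg A p : pinterior (fun x => A (neg x)) p <-> pinterior A (neg p).
Proof.
  split; intros [e [He Hq]]; exists e; split; auto; intros q Hd.
  - rewrite <- (neg_neg q). apply Hq. rewrite <- dist_neg, neg_neg. auto.
  - apply Hq. rewrite <- dist_neg in Hd. auto.
Qed.

Lemma pclos_neg A p : pclosure (fun x => A (neg x)) p <-> pclosure A (neg p).
Proof.
  split; intros Hc e He; destruct (Hc e He) as [q [Hq Hd]].
  - exists (neg q). split; auto. rewrite dist_neg; auto.
  - exists (neg q). split; [rewrite neg_neg; auto|]. rewrite <- dist_neg, neg_neg; auto.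
Qed.

Lemma pbound_neg A p : pboundary (fun x => A (neg x)) p -> pboundary A (neg p).
Proof. intros [H1 H2]. split; [apply pclos_neg; auto|]. intro C; apply H2, pint_neg; auto. Qed.

Lemma rect_neg r p : rect (negr r) p <-> rect r (neg p).
Proof. destruct r as [[[a b] c] d]; unfold neg; simpl. lra. Qed.

Lemma domain_neg P0 h H p : domain (fun x => P0 (neg x)) h (fun i => negr (H i)) p <-> domain P0 h H (neg p).
Proof.
  unfold domain. split; intros [H1 H2]; split; auto; intros i Hi C; apply (H2 i Hi).
  - apply (pint_ext (fun x => rect (H i) (neg x))); [intro; rewrite rect_neg; tauto|]. apply pint_neg. auto.
  - apply (proj1 (pint_neg (rect (H i)) p)). apply (pint_ext (rect (negr (H i)))); auto. intro; apply rect_neg.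
Qed.

Lemma neg_comb a b l : neg (comb a b l) = comb (neg a) (neg b) l.
Proof. unfold neg, comb; simpl; f_equal; ring. Qed.

Lemma gp_le A s t : gp A s t -> fst s <= fst t /\ snd s <= snd t.
Proof. intros [g [K [_ [_ [M [G0 [G1 _]]]]]]]. rewrite <- G0, <- G1. apply M; lra. Qed.

Lemma props_of_poly P0 : convex_polygon P0 -> Conv P0 /\ Clos P0 /\ Bnd P0.
Proof.
  intros [[l Hl] _]. split; [|split].
  - intros a b t Ha Hb Ht. apply Hl. apply hull_conv; auto; apply Hl; auto.
  - intros p Hp. apply Hl. apply hull_clos. intros e He. destruct (Hp e He) as [q [Hq Hd]].
    exists q; split; auto; apply Hl; auto.
  - destruct (hull_bnd l) as [B HB]. exists B. intros p Hp; apply HB, Hl; auto.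
Qed.

Lemma poly_neg g ts z : poly_len (fun u => neg (g u)) z ts = poly_len g z ts.
Proof. revert z; induction ts as [|x r IH]; intro z; simpl; auto. rewrite dist_neg, IH; auto. Qed.

Theorem proposition3 :
  forall (h : nat) (P0 : point -> Prop) (H : nat -> R * R * R * R),
    convex_polygon P0 ->
    (forall i, (i < h)%nat -> nondeg_rect (H i)) ->
    (forall i, (i < h)%nat -> forall p, rect (H i) p -> pinterior P0 p) ->
    (forall i j, (i < h)%nat -> (j < h)%nat -> i <> j ->
       forall p, ~ (rect (H i) p /\ rect (H j) p)) ->
    forall (d : R), diam2 (domain P0 h H) d ->
    forall s, domain P0 h H s ->
    exists (g : R -> point) (t : point),
      pboundary P0 t /\ path_in (domain P0 h H) g s t /\ length_le g d.
Proof.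
  intros h P0 H Hpoly _ Hin Hdis d Hd s Hs.
  destruct (props_of_poly P0 Hpoly) as [Hc [Hcl Hb]].
  assert (Hin' : forall i, (i < h)%nat -> forall p, rect (H i) p -> P0 p) by (intros; eapply pint_sub; eauto).
  destruct (core P0 h H Hc Hcl Hb Hin' Hdis s Hs) as [t1 [Hb1 [HD1 Hg1]]].
  set (P0n := fun x => P0 (neg x)). set (Hn := fun i => negr (H i)).
  assert (Hcn : Conv P0n).
  { intros a b l Ha Hb' Hl. unfold P0n. rewrite neg_comb. apply Hc; auto. }
  assert (Hcln : Clos P0n).
  { intros p Hp. apply Hcl. apply pclos_neg. auto. }
  assert (Hbn : Bnd P0n).
  { destruct Hb as [B HB]. exists B. intros p Hp. destruct (HB _ Hp) as [X Y]. unfold neg in X, Y; simpl in X, Y.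
    rewrite Rabs_Ropp in X, Y. auto. }
  assert (Hinn : forall i, (i < h)%nat -> forall p, rect (Hn i) p -> P0n p).
  { intros i Hi p Hr. apply (Hin' i Hi). apply rect_neg. auto. }
  assert (Hdisn : forall i j, (i < h)%nat -> (j < h)%nat -> i <> j -> forall p, ~ (rect (Hn i) p /\ rect (Hn j) p)).
  { intros i j Hi Hj Hij p [R1 R2]. apply (Hdis i j Hi Hj Hij (neg p)). unfold Hn in *. rewrite <- !rect_neg. auto. }
  assert (Hsn : domain P0n h Hn (neg s)) by (apply domain_neg; rewrite neg_neg; auto).
  destruct (core P0n h Hn Hcn Hcln Hbn Hinn Hdisn (neg s) Hsn) as [t2 [Hb2 [HD2 Hg2]]].
  destruct (gp_le _ _ _ Hg1) as [L1x L1y]. destruct (gp_le _ _ _ Hg2) as [L2x L2y].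
  destruct (gp_path _ _ _ Hg1) as [g1 [Hp1 Hl1]].
  destruct (gp_path _ _ _ Hg2) as [g2 [[C2 [G20 [G21 I2]]] Hl2]].
  set (t := neg t2).
  assert (HDt : domain P0 h H t) by (apply domain_neg; auto).
  assert (Hdt : dist t1 t <= d).
  { destruct Hd as [Hub _]. apply Hub. exists t1, t. auto. }
  unfold neg in L2x, L2y; simpl in L2x, L2y.
  set (a := fst t1 - fst t). set (b := snd t1 - snd t).
  assert (Ha : 0 <= a) by (unfold a, t, neg; simpl; lra).
  assert (Hb0 : 0 <= b) by (unfold b, t, neg; simpl; lra).
  assert (Hab : (a + b) / 2 <= d).
  { eapply Rle_trans; [|apply Hdt]. unfold dist. fold a b.
    rewrite <- (sqrt_pow2 ((a + b) / 2)) by lra. apply sqrt_le_1_alt.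
    assert (0 <= (a - b) ^ 2) by apply pow2_ge_0. nra. }
  destruct (Rle_dec ((fst t1 - fst s) + (snd t1 - snd s)) ((fst s - fst t) + (snd s - snd t))) as [Hle|Hgt].
  - exists g1, t1. split; auto. split; auto. intros ts T1 T2. eapply Rle_trans; [apply Hl1; auto|].
    unfold a, b in Hab. lra.
  - exists (fun u => neg (g2 u)), t. split; [apply pbound_neg; auto|split].
    + split; [|split; [|split]].
      * intros x Hx e He. destruct (C2 x Hx e He) as [del [Hdel Hq]]. exists del; split; auto.
        intros u Hu Hux. rewrite dist_neg. auto.
      * rewrite G20, neg_neg; auto.
      * rewrite G21; auto.
      * intros u Hu. apply domain_neg. apply I2; auto.
    + intros ts T1 T2.
      assert (E : poly_len (fun u => neg (g2 u)) 0 ts = poly_len g2 0 ts).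
      { apply poly_neg. }
      rewrite E. eapply Rle_trans; [apply Hl2; auto|]. unfold neg; simpl. unfold a, b, t, neg in *; simpl in *. lra.
Qed.
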